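(* Let $A, B, C \in \mathbb{C}^{m\times n}$. The $\top$-Stein matrix equation $$X = A X^\top B + C$$ has a unique solution $X \in \mathbb{C}^{m\times n}$ if and only if both of the following conditions hold: (i) for every $\lambda \in \sigma(A^\top B)$ with $\lambda \neq -1$ and $\lambda \neq 0$, one has $\dfrac{1}{\lambda} \notin \sigma(A^\top B)$; (ii) if $-1 \in \sigma(A^\top B)$, then $-1$ is a simple eigenvalue of $A^\top B$.
   Context: For a square matrix $M$, $\sigma(M)$ denotes the set of eigenvalues of $M$. Here $X^\top$ denotes the (ordinary, non-conjugate) transpose of $X$, also for complex matrices. A simple eigenvalue is one of algebraic multiplicity one. *)

(* Defs.v *)
From HB Require Import structures.
From mathcomp Require Import all_boot all_order all_algebra.
From mathcomp Require Import complex.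
From mathcomp Require Import reals.
Set Implicit Arguments. Unset Strict Implicit. Unset Printing Implicit Defensive.
Import Order.TTheory GRing.Theory Num.Theory.
Local Open Scope ring_scope.

Definition spectrum (F : fieldType) (n : nat) (M : 'M[F]_n) (l : F) : Prop :=
  eigenvalue M l.

Definition alg_mult (F : fieldType) (n : nat) (M : 'M[F]_n) (l : F) : nat :=
  mup l (char_poly M).

Definition simple_eigenvalue (F : fieldType) (n : nat) (M : 'M[F]_n) (l : F) : Prop :=
  alg_mult M l = 1%N.

(* Main.v *)
Require Import Defs.
From HB Require Import structures.
From mathcomp Require Import all_boot all_order all_algebra.
From mathcomp Require Import complex.
From mathcomp Require Import reals.
From mathcomp Require Import ring.
Import Order.TTheory GRing.Theory Num.Theory.
Local Open Scope ring_scope.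

Set Implicit Arguments. Unset Strict Implicit. Unset Printing Implicit Defensive.


Section CharPoly.
Variable F : fieldType.

Lemma char_poly_trmx n (M : 'M[F]_n) : char_poly M^T = char_poly M.
Proof.
rewrite /char_poly -det_tr; congr (\det _); apply/matrixP => i j.
by rewrite !mxE eq_sym.
Qed.

Lemma char_poly_conj n (S M : 'M[F]_n) : S \in unitmx ->
  char_poly (S *m M *m invmx S) = char_poly M.
Proof.
move=> Su; rewrite /char_poly.
have -> : char_poly_mx (S *m M *m invmx S) =
   map_mx polyC S *m char_poly_mx M *m map_mx polyC (invmx S).
  rewrite /char_poly_mx mulmxBr mulmxBl -!map_mxM.
  congr (_ - _); rewrite scalar_mxC -mulmxA -map_mxM mulmxV // map_mx1 mulmx1 //.
rewrite !det_mulmx mulrAC -det_mulmx -map_mxM mulmxV // map_mx1 det1 mul1r //.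
Qed.

Lemma char_poly_lblock m k (A : 'M[F]_m) (C : 'M[F]_(k, m)) (D : 'M[F]_k) :
  char_poly (block_mx A 0 C D) = char_poly A * char_poly D.
Proof.
rewrite /char_poly.
have -> : char_poly_mx (block_mx A 0 C D) =
  block_mx (char_poly_mx A) 0 (- map_mx polyC C) (char_poly_mx D).
  rewrite /char_poly_mx map_block_mx/= !map_mx0.
  by rewrite scalar_mx_block opp_block_mx add_block_mx !subr0 ?oppr0 add0r.
by rewrite det_lblock.
Qed.

Lemma char_poly_11 (a : F) : char_poly (a%:M : 'M[F]_1) = 'X - a%:P.
Proof.
by rewrite char_poly_trig ?big_ord1 ?mxE //; apply/is_trig_mxP => i j; rewrite !ord1.
Qed.


Lemma basis_rV n' (v : 'rV[F]_(1 + n')) : v != 0 ->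
  exists2 S : 'M[F]_(1 + n'), S \in unitmx & usubmx S = v.
Proof.
move=> v0; have rk : \rank v = 1%N by rewrite rank_rV v0.
exists (block_mx (col_ebase v) 0 0 1%:M *m row_ebase v).
  by rewrite unitmx_mul row_ebase_unit andbT unitmxE det_ublock det1 mulr1
    -unitmxE col_ebase_unit.
rewrite -mul_usub_mx block_mxEv col_mxKu.
have Hv := mulmx_ebase v; rewrite rk pid_mx_row in Hv.
by rewrite -[in RHS]Hv mul_mx_row mulmx1 mulmx0.
Qed.

Lemma block_form n' (M S : 'M[F]_(1 + n')) a : S \in unitmx ->
  usubmx S *m M = a *: usubmx S ->
  S *m M *m invmx S = block_mx a%:M 0 (dlsubmx (S *m M *m invmx S))
                                     (drsubmx (S *m M *m invmx S)).
Proof.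
move=> Su hS; set T := S *m M *m invmx S.
have uT : usubmx T = a *: row_mx 1%:M 0.
  rewrite /T -!mul_usub_mx hS -scalemxAl mul_usub_mx mulmxV //.
  by rewrite (scalar_mx_block 1 n') block_mxEv col_mxKu.
rewrite -[T in LHS]submxK; congr block_mx.
  by rewrite /ulsubmx uT scale_row_mx row_mxKl scalemx1.
by rewrite /ursubmx uT scale_row_mx row_mxKr scaler0.
Qed.

Lemma char_block n' (M S : 'M[F]_(1 + n')) a : S \in unitmx ->
  usubmx S *m M = a *: usubmx S ->
  char_poly M = ('X - a%:P) * char_poly (drsubmx (S *m M *m invmx S)).
Proof.
move=> Su hS; rewrite -(char_poly_conj M Su) {1}(block_form Su hS).
by rewrite char_poly_lblock char_poly_11.
Qed.

End CharPoly.
Section Vec.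
Variable F : numFieldType.

Lemma VQa k (T : 'M[F]_k) (v w : 'rV_k) l mu :
  v *m T = l *: v -> w *m T = mu *: w -> l * mu = 1 ->
  (v^T *m w + l *: (w^T *m v))^T *m T = v^T *m w + l *: (w^T *m v).
Proof.
move=> hv hw hl.
rewrite linearD linearZ /= !trmx_mul !trmxK mulmxDl -scalemxAl -!mulmxA hv hw.
by rewrite -!scalemxAr scalerA hl scale1r addrC.
Qed.

Lemma rV_nz k (v : 'rV[F]_k) : v != 0 -> exists i, v 0 i != 0.
Proof.
move=> v0; case: (pickP (fun i => v 0 i != 0)) => [i vi | h]; first by exists i.
by case/eqP: v0; apply/rowP => i; move/negbFE: (h i) => /eqP ->; rewrite mxE.
Qed.

Lemma trmul_entry k (v w : 'rV[F]_k) i j : (v^T *m w) i j = v 0 i * w 0 j.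
Proof. by rewrite mxE big_ord1 !mxE. Qed.

Lemma VQa_nz k (v w : 'rV[F]_k) l : v != 0 -> w != 0 -> l != -1 ->
  v^T *m w + l *: (w^T *m v) != 0.
Proof.
move=> /rV_nz [i vi] /rV_nz [j wj] l1; apply/negP => /eqP hQ.
have E a b : v 0 a * w 0 b + l * (w 0 a * v 0 b) = 0.
  by move/matrixP: hQ => /(_ a b); rewrite !(mxE, big_ord1).
have l1' : 1 + l != 0 by rewrite addrC addr_eq0.
have wi : w 0 i = 0.
  apply/eqP; apply: contraNT l1' => wi0.
  have := E i i; rewrite [w 0 i * _]mulrC -[X in X + _]mul1r -mulrDl.
  by move/eqP; rewrite !mulf_eq0 (negPf vi) (negPf wi0) !orbF.
have vj : v 0 j = 0.
  apply/eqP; apply: contraNT l1' => vj0.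
  have := E j j; rewrite [w 0 j * _]mulrC -[X in X + _]mul1r -mulrDl.
  by move/eqP; rewrite !mulf_eq0 (negPf vj0) (negPf wj) !orbF.
by have := E i j; rewrite wi vj !mul0r mulr0 addr0 => /eqP; rewrite mulf_eq0 (negPf vi) (negPf wj).
Qed.

Lemma VQb k (T : 'M[F]_k) (v w : 'rV_k) b :
  v *m T = - v -> w *m T = - w + b *: v ->
  (v^T *m w - w^T *m v - (b / 2) *: (v^T *m v))^T *m T =
   v^T *m w - w^T *m v - (b / 2) *: (v^T *m v).
Proof.
move=> hv hw.
rewrite !linearD !linearN !linearZ /= !trmx_mul !trmxK !mulmxDl.
rewrite ?mulNmx -?scalemxAl ?mulNmx -?scalemxAl.
rewrite -!mulmxA hv hw mulmxDr !mulmxN -!scalemxAr.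
apply/matrixP => i j; rewrite !(mxE, big_ord1); by field.
Qed.

Lemma transfer k (M S Q : 'M[F]_k) : S \in unitmx ->
  Q^T *m (S *m M *m invmx S) = Q ->
  (S^T *m Q *m S = (S^T *m Q *m S)^T *m M) /\ (Q != 0 -> S^T *m Q *m S != 0).
Proof.
move=> Su hQ; split.
  rewrite !trmx_mul trmxK -!mulmxA; congr (_ *m _).
  by rewrite -[in LHS]hQ -mulmxA mulmxKV.
apply: contraNN => /eqP P0; apply/eqP.
have -> : Q = invmx S^T *m (S^T *m Q *m S) *m invmx S.
  by rewrite !mulmxA mulVmx ?unitmx_tr // mul1mx mulmxK.
by rewrite P0 mulmx0 mul0mx.
Qed.

End Vec.
Section Rev.
Variable K : numClosedFieldType.

Definition revd (d : nat) (f : {poly K}) := \poly_(i < d.+1) f`_(d - i).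

Lemma pow_conj n' (M P : 'M[K]_n'.+1) : P = M^T * P * M ->
  forall k, M^T ^+ k * P * M ^+ k = P.
Proof.
move=> hP; elim=> [|k IH]; first by rewrite !expr0 mul1r mulr1.
have -> : M^T ^+ k.+1 * P * M ^+ k.+1 = M^T ^+ k * (M^T * P * M) * M ^+ k.
  by rewrite exprSr exprS !mulrA.
by rewrite -hP.
Qed.

Lemma rev_horner_mx n' (M P : 'M[K]_n'.+1) d (f : {poly K}) : P = M^T * P * M ->
  (size f <= d.+1)%N ->
  horner_mx M^T f * P * M ^+ d = P * horner_mx M (revd d f).
Proof.
move=> hP hf.
have fE : f = \poly_(i < d.+1) f`_i.
  apply/polyP => i; rewrite coef_poly; case: ltnP => // h.
  by rewrite nth_default // (leq_trans hf h).
rewrite /revd {1}fE !poly_def !rmorph_sum /= mulr_suml mulr_suml mulr_sumr.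
rewrite (reindex_inj rev_ord_inj) /=; apply: eq_bigr => i _.
have hi : (i <= d)%N by rewrite -ltnS.
rewrite !linearZ /= !rmorphXn /= !horner_mx_X /= subSS.
rewrite -!scalerAl -scalerAr; congr (_ *: _).
by rewrite -[in M ^+ d](subnK hi) exprD mulrA pow_conj.
Qed.

Lemma horner_revd d (f : {poly K}) (x : K) : (size f <= d.+1)%N -> x != 0 ->
  (revd d f).[x] = x ^+ d * f.[x^-1].
Proof.
move=> hf x0; rewrite horner_poly (horner_coef_wide _ hf) mulr_sumr.
rewrite (reindex_inj rev_ord_inj) /=; apply: eq_bigr => i _.
have hi : (i <= d)%N by rewrite -ltnS.
rewrite subSS subKn // exprVn -[in x ^+ d](subnK hi) exprD.
by field; rewrite expf_neq0.
Qed.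

Lemma revd0 d (f : {poly K}) : (revd d f).[0] = f`_d.
Proof. by rewrite horner_coef0 coef_poly subn0. Qed.


Lemma dirA_poly n' (M P : 'M[K]_n'.+1) (psi : {poly K}) d :
  P = M^T * P * M -> (size psi <= d.+1)%N ->
  horner_mx M^T (psi * ('X + 1)) = 0 ->
  P * horner_mx M (revd d psi * ('X + 1)) = 0.
Proof.
move=> hP hs h0.
have e1 : (M^T + 1) * (P * M ^+ d.+1) = P * (M ^+ d * (M + 1)).
  rewrite mulrA exprS mulrA mulrDl mul1r mulrDl -hP mulrDl mulrDr mulr1.
  by rewrite -mulrA -exprS -exprSr mulrDr addrC.
have H := congr1 (fun X => X * P * M ^+ d.+1) h0.
rewrite /= !mul0r rmorphM /= rmorphD /= horner_mx_X rmorph1 in H.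
rewrite rmorphM /= rmorphD /= horner_mx_X rmorph1 mulrA -(rev_horner_mx hP hs).
by rewrite -[RHS]H -!mulrA e1.
Qed.

Lemma dirA_coprime n' (M : 'M[K]_n'.+1) (psi : {poly K}) d :
  (forall l, eigenvalue M l -> l != -1 -> l != 0 -> ~ eigenvalue M l^-1) ->
  size psi = d.+1 -> ~~ root psi (-1) ->
  (forall z, root psi z -> root (char_poly M) z) ->
  coprimep (revd d psi) (char_poly M).
Proof.
move=> hi hs hr hz; apply: Pdiv.ClosedField.root_coprimep => x rx.
apply/negP => /eqP cx.
have x0 : x != 0.
  apply: contraTneq rx => ->; rewrite /root revd0.
  have : lead_coef psi != 0 by rewrite lead_coef_eq0 -size_poly_eq0 hs.
  by rewrite lead_coefE hs.
have rxi : root psi x^-1.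
  move: rx; rewrite /root horner_revd ?hs // mulf_eq0 expf_eq0 (negPf x0) andbF.
  by [].
have xi1 : x^-1 != -1 by apply: contraNneq hr => <-.
have x1 : x != -1 by apply: contraNneq xi1 => ->; rewrite invrN invr1.
apply: (hi x) => //; first by rewrite eigenvalue_root_char /root cx.
by rewrite eigenvalue_root_char; apply: hz.
Qed.

Lemma dirA_PM1 n' (M P : 'M[K]_n'.+1) (r : {poly K}) :
  P * horner_mx M (r * ('X + 1)) = 0 -> coprimep r (char_poly M) ->
  P * (M + 1) = 0.
Proof.
move=> h /Bezout_eq1_coprimepP [[u1 u2] /= hu].
have -> : M + 1 = horner_mx M ((r * ('X + 1)) * u1 + ('X + 1) * u2 * char_poly M).
  rewrite (_ : _ + _ = ('X + 1) * (u1 * r + u2 * char_poly M)); last by ring.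
  by rewrite hu mulr1 rmorphD /= horner_mx_X rmorph1.
by rewrite rmorphD /= rmorphM /= [in X in _ + X]rmorphM /= Cayley_Hamilton mulr0 addr0 mulrA h mul0r.
Qed.

Lemma dirA_skew n' (M P : 'M[K]_n'.+1) :
  P = P^T * M -> P * (M + 1) = 0 -> P^T = - P /\ P * M = - P.
Proof.
move=> hP h1.
have PM : P * M = - P by apply/eqP; rewrite -addr_eq0 -{2}(mulr1 P) -mulrDr h1.
have PT : P^T = M^T * P.
  by rewrite {1}hP -mulmxE trmx_mul trmxK mulmxE.
split=> //; rewrite PT; apply/eqP; rewrite -addr_eq0; apply/eqP.
by rewrite {2}hP PT -mulrA PM mulrN addrN.
Qed.

End Rev.



Section Dirs.
Variable K : numClosedFieldType.

Lemma mx_nz k l (P : 'M[K]_(k, l)) : P != 0 -> exists i j, P i j != 0.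
Proof.
move=> P0; case: (pickP (fun ij : 'I_k * 'I_l => P ij.1 ij.2 != 0)) => [[i j] h | h].
  by exists i, j.
by case/eqP: P0; apply/matrixP => i j; move/negbFE: (h (i, j)) => /eqP ->; rewrite mxE.
Qed.

Lemma skew_mult n' (M P : 'M[K]_(1 + n')) : P != 0 -> P^T = - P ->
  P *m M = - P -> ('X - (-1)%:P) ^+ 2 %| char_poly M.
Proof.
move=> P0 PT PM; have [i [j Pij]] := mx_nz P0.
have Pskew a b : P b a = - P a b.
  by move/matrixP: PT => /(_ a b); rewrite !mxE.
have Pii a : P a a = 0.
  have := Pskew a a => /eqP; rewrite -addr_eq0 -mulr2n mulrn_eq0 /=.
  by move/eqP.
set v := row i P; set u := row j P.
have vM : v *m M = - v by rewrite -row_mul PM linearN.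
have uM : u *m M = - u by rewrite -row_mul PM linearN.
have v0 : v != 0.
  apply/eqP => h; move: Pij; have -> : P i j = v 0 j by rewrite mxE.
  by rewrite h mxE eqxx.
have [S Su hSv] := basis_rV v0.
have hS : usubmx S *m M = (-1) *: usubmx S by rewrite hSv vM scaleN1r.
have hT := block_form Su hS; have hc := char_block Su hS.
set T := S *m M *m invmx S in hT hc.
set z := u *m invmx S.
have zT : z *m T = - z.
  by rewrite /z /T !mulmxA mulmxKV // uM mulNmx.
move: zT; rewrite -[z]hsubmxK hT mul_row_block opp_row_mx => /eq_row_mx [_ yD].
rewrite mulmx0 add0r in yD.
have y0 : rsubmx z != 0.
  apply/negP => /eqP y0.
  have uE : u = lsubmx z *m v.
    have -> : u = z *m S by rewrite /z mulmxKV.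
    by rewrite -{1}[z]hsubmxK y0 -{1}[S]vsubmxK mul_row_col mul0mx addr0 hSv.
  move/matrixP: uE => /(_ 0 i); rewrite !mxE big_ord1 !mxE Pii mulr0 Pskew.
  by move/eqP; rewrite oppr_eq0 (negPf Pij).
have eD : eigenvalue (drsubmx T) (-1).
  by apply/eigenvalueP; exists (rsubmx z); rewrite // yD scaleN1r.
have rD : root (char_poly (drsubmx T)) (-1) by rewrite -eigenvalue_root_char.
have [q hq] := factor_theorem _ _ rD.
by rewrite hc hq expr2 dvdp_mul // dvdp_mull.
Qed.


Definition condi n (M : 'M[K]_n) :=
  forall l, eigenvalue M l -> l != -1 -> l != 0 -> ~ eigenvalue M l^-1.
Definition condii n (M : 'M[K]_n) :=
  eigenvalue M (-1) -> mup (-1) (char_poly M) = 1%N.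

Lemma XaddE : 'X - (-1)%:P = 'X + 1 :> {poly K}.
Proof. by rewrite rmorphN1 opprK. Qed.

Lemma dirA n (M : 'M[K]_n) : condi M -> condii M ->
  forall P, P = P^T *m M -> P = 0.
Proof.
case: n M => [|n'] M hi hii P hP; first by apply: flatmx0.
have hP' : P = P^T * M by rewrite -mulmxE.
have hPc : P = M^T * P * M.
  rewrite {1}hP' -mulmxE; congr (_ *m _).
  by rewrite {1}hP' -mulmxE trmx_mul trmxK.
have ch0 : char_poly M != 0 by rewrite monic_neq0 // char_poly_monic.
have PM1 : P * (M + 1) = 0.
  case: (boolP (root (char_poly M) (-1))) => hr.
    have [psi hpsi] := factor_theorem _ _ hr.
    have psi0 : psi != 0 by apply: contraNneq ch0 => h; rewrite hpsi h mul0r.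
    have hs : size psi = n'.+1.
      have := size_char_poly M; rewrite hpsi size_mul ?polyXsubC_eq0 //.
      by rewrite size_XsubC addn2 /= => -[].
    have hr' : ~~ root psi (-1).
      apply/negP => rp; have e1 : eigenvalue M (-1) by rewrite eigenvalue_root_char.
      have := hii e1 => /eqP; apply/negP; rewrite neq_ltn; apply/orP; right.
      rewrite -[(1 < _)%N]/(2 <= _)%N mup_geq // hpsi.
      have [q hq] := factor_theorem _ _ rp.
      by rewrite hq expr2 -mulrA dvdp_mull.
    apply: (@dirA_PM1 _ _ M P (revd n' psi)).
      apply: (dirA_poly hPc); first by rewrite hs.
      by rewrite -XaddE -hpsi -char_poly_trmx Cayley_Hamilton.
    apply: dirA_coprime => // z rz; rewrite hpsi rootM rz //.
  apply: (@dirA_PM1 _ _ M P (revd n'.+1 (char_poly M))).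
    apply: (dirA_poly hPc); first by rewrite size_char_poly.
    by rewrite rmorphM /= -char_poly_trmx Cayley_Hamilton mul0r.
  by apply: dirA_coprime => //; rewrite size_char_poly.
have [PT PM] := dirA_skew hP' PM1.
apply/eqP/negPn/negP => P0.
have hd : ('X - (-1)%:P) ^+ 2 %| char_poly M.
  have PM' : P *m M = - P by rewrite mulmxE.
  exact: (@skew_mult n' M P P0 PT PM').
have rr : root (char_poly M) (-1).
  by rewrite -dvdp_XsubCl; apply: dvdp_trans hd; rewrite expr2 dvdp_mulr ?dvdpp.
have e1 : eigenvalue M (-1) by rewrite eigenvalue_root_char.
have := hii e1 => /eqP; apply/negP.
by rewrite neq_ltn; apply/orP; right; rewrite -[(1 < _)%N]/(2 <= _)%N mup_geq.
Qed.


Lemma dirB n (M : 'M[K]_n) : (forall P, P = P^T *m M -> P = 0) ->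
  condi M /\ condii M.
Proof.
move=> hP; split.
  move=> l el l1 l0 eli.
  have [v hv v0] := eigenvalueP el; have [w hw w0] := eigenvalueP eli.
  have := VQa hv hw (mulfV l0) => /esym /hP h.
  by move: (VQa_nz v0 w0 l1); rewrite h eqxx.
move=> e1.
have ch0 : char_poly M != 0 by rewrite monic_neq0 // char_poly_monic.
have m1 : (1 <= mup (-1) (char_poly M))%N.
  by rewrite mup_geq // expr1 dvdp_XsubCl -eigenvalue_root_char.
apply/eqP; rewrite eqn_leq m1 andbT; apply/negPn/negP; rewrite -ltnNge => m2.
have hd : ('X - (-1)%:P) ^+ 2 %| char_poly M by rewrite -mup_geq.
case: n M hP e1 ch0 m1 m2 hd => [|n'] M hP e1 ch0 m1 m2 hd.
  by have [v _ v0] := eigenvalueP e1; move: v0; rewrite thinmx0 eqxx.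
have [v hv v0] := eigenvalueP e1.
have [S Su hSv] := @basis_rV _ n' v v0.
have hS : usubmx S *m M = (-1) *: usubmx S by rewrite hSv hv.
have hT := block_form Su hS; have hc := char_block Su hS.
set T := S *m M *m invmx S in hT hc.
have rD : root (char_poly (drsubmx T)) (-1).
  rewrite -dvdp_XsubCl -(@dvdp_mul2l _ ('X - (-1)%:P)) ?polyXsubC_eq0 //.
  by rewrite -hc -expr2.
have [y hy y0] := eigenvalueP (etrans (eigenvalue_root_char _ _) rD).
pose e := row_mx 1%:M 0 : 'rV[K]_(1 + n').
pose w := row_mx 0 y : 'rV[K]_(1 + n').
pose b := (y *m dlsubmx T) 0 0.
have eT : e *m T = - e.
  rewrite hT mul_row_block !mul1mx !mul0mx !addr0 /e opp_row_mx oppr0.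
  by rewrite -scalemx1 scaleN1r.
have wT : w *m T = - w + b *: e.
  rewrite hT mul_row_block !mul0mx !add0r hy scaleN1r /w /e opp_row_mx oppr0.
  rewrite scale_row_mx scaler0 add_row_mx addr0 add0r scalemx1 -mx11_scalar //.
have hQ := VQb eT wT.
have [hP1 hP2] := transfer Su hQ.
apply: (negP (hP2 _)); last by apply/eqP/hP.
apply/negP => /eqP Q0.
have : rsubmx (e *m (e^T *m w - w^T *m e - (b / 2) *: (e^T *m e))) = y.
  rewrite !mulmxDr !mulmxN -!scalemxAr !mulmxA.
  have ee : e *m e^T = 1%:M.
    by rewrite /e tr_row_mx mul_row_col trmx1 mulmx1 linear0 mul0mx addr0.
  have ew : e *m w^T = 0.
    by rewrite /e /w tr_row_mx mul_row_col linear0 mulmx0 mul0mx addr0.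
  rewrite ee ew !mul1mx mul0mx subr0 /w /e scale_row_mx opp_row_mx add_row_mx.
  by rewrite row_mxKr scaler0 oppr0 addr0.
by rewrite Q0 mulmx0; move/eqP: y0 => y0 h; apply: y0; rewrite -h; apply/matrixP => a c; rewrite !mxE.
Qed.

End Dirs.



Section Final.
Variable K : fieldType.

Definition stf m n (A B : 'M[K]_(m, n)) (X : 'M[K]_(m, n)) := X - A *m X^T *m B.

Fact stf_lin m n (A B : 'M[K]_(m, n)) : linear (stf A B).
Proof.
move=> a X Y; rewrite /stf linearD linearZ /= mulmxDr mulmxDl -scalemxAr -scalemxAl.
by rewrite scalerBr opprD addrACA.
Qed.

HB.instance Definition _ m n (A B : 'M[K]_(m, n)) :=
  GRing.isLinear.Build K 'M[K]_(m, n) 'M[K]_(m, n) _ (stf A B) (stf_lin A B).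

Lemma part0 m n (A B C : 'M[K]_(m, n)) :
  (exists! X, X = A *m X^T *m B + C) <-> (forall X, X = A *m X^T *m B -> X = 0).
Proof.
split.
  move=> [X0 [h0 hu]] Y hY.
  have H : X0 + Y = A *m (X0 + Y)^T *m B + C.
    by rewrite {1}h0 {1}hY linearD /= mulmxDr mulmxDl addrAC.
  by apply: (addrI X0); rewrite addr0 -(hu _ H).
move=> hh.
set L := lin_mx (stf A B).
have inj (u : 'rV_(m * n)) : u *m L = 0 -> u = 0.
  rewrite /L mul_rV_lin => /eqP; rewrite mxvec_eq0 /stf subr_eq0 => /eqP h.
  by apply/eqP; rewrite -vec_mx_eq0; apply/eqP; apply: hh.
have Lu : L \in unitmx.
  rewrite -row_free_unit -kermx_eq0; apply/eqP/row_matrixP => i; rewrite row0.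
  by apply: inj; rewrite -row_mul mulmx_ker row0.
pose X := vec_mx (mxvec C *m invmx L).
have hX : stf A B X = C by rewrite /X -(mx_rV_lin (stf A B)) -/L mulmxKV // mxvecK.
have hX' : X = A *m X^T *m B + C by rewrite -hX /stf addrC subrK.
exists X; split=> // Y hY; apply/eqP; rewrite -subr_eq0; apply/eqP; apply: hh.
rewrite {1}hX' {1}hY linearB /= mulmxBr mulmxBl.
by rewrite opprD addrACA subrr addr0.
Qed.

Lemma part1 m n (A B : 'M[K]_(m, n)) :
  (forall X, X = A *m X^T *m B -> X = 0) <->
  (forall P : 'M_n, P = P^T *m (A^T *m B) -> P = 0).
Proof.
split=> h.
  move=> P hP.
  have AP : A *m P = 0.
    by apply: h; rewrite trmx_mul -!mulmxA -hP.
  by rewrite hP !mulmxA -trmx_mul AP trmx0 !mul0mx.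
move=> X hX.
have XB : X^T *m B = 0.
  by apply: h; rewrite {1}hX !trmx_mul !trmxK !mulmxA.
by rewrite hX -mulmxA XB mulmx0.
Qed.

End Final.

Theorem theorem1 (R : realType) (m n : nat) (A B C : 'M[R[i]]_(m, n)) :
  (exists! X : 'M[R[i]]_(m, n), X = A *m X^T *m B + C) <->
  ((forall l : R[i], spectrum (A^T *m B) l -> l != -1 -> l != 0 ->
      ~ spectrum (A^T *m B) l^-1) /\
   (spectrum (A^T *m B) (-1) -> simple_eigenvalue (A^T *m B) (-1))).

Proof.
rewrite part0 part1; split.
  by move=> h; have [h1 h2] := dirB h; split.
by move=> [h1 h2]; apply: dirA.
Qed.
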